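(* (i) If $\alpha=\beta=0$, then $z_\alpha=z_\beta=1$; in particular $x_{\rm lavs}(h_1,h_2)=x_{\rm peak}(h_1,h_2)$ and $x_{\rm gloom}(h_1,h_2)=x_{\rm valy}(h_1,h_2)$. As $\alpha\to1/\delta$, $z_\alpha\to0$; as $\beta\to+\infty$, $z_\beta\to+\infty$. (ii) For fixed $h_1\ge h_2>0$ (and all other parameters fixed), as the risk-aversion parameter $\gamma\to\infty$, $$\lim_{\gamma\to\infty}\frac{x_{\rm lavs}(h_1,h_2)}{c^*(x_{\rm lavs}(h_1,h_2),h_1,h_2)}=\lim_{\gamma\to\infty}\frac{x_{\rm gloom}(h_1,h_2)}{c^*(x_{\rm gloom}(h_1,h_2),h_1,h_2)}=\frac1r.$$
   Context: Parameters: $r>0$, $\mu>0$, $\sigma>0$, $\kappa=(\mu-r)/\sigma$, $\delta>0$, $\gamma>0,\gamma\ne1$, $0\le\alpha\le1/\delta$, $\beta\ge0$, $K_0:=r+\frac{\delta-r}{\gamma}+\frac{\gamma-1}{2\gamma^2}\kappa^2>0$. $\gamma^*=-(1-\gamma)/\gamma$; $m_1>1$ and $m_2<\min(\gamma^*,0)$ are the roots of $\frac{\kappa^2}{2}m^2+(\delta-r-\frac{\kappa^2}{2})m-\delta=0$; $z_\alpha\in(0,1-\alpha\delta]$ solves $\frac{2}{\kappa^2m_1(m_1-1)}z^{m_1}+\frac{z}{r}(m_2-1)+m_2(\alpha-\frac1\delta)=0$; $z_\beta\in[1+\beta\delta,\infty)$ solves $\frac{2}{\kappa^2m_2(m_2-1)}z^{m_2}+\frac{z}{r}(m_1-1)-m_1(\beta+\frac1\delta)=0$.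 Coefficients: $C_5(h_2)=\frac{1-\gamma^*}{(m_1-m_2)(m_1-\gamma^* )}\big(\frac{m_2(\beta\delta+1)}{\delta}z_\beta^{-m_1}+\frac{1-m_2}{r}z_\beta^{1-m_1}\big)h_2^{1+\gamma(m_1-1)}$; $C_3(h_2)=C_5(h_2)+\frac{2(\gamma^*-1)}{\kappa^2(m_1-m_2)m_1(m_1-1)(m_1-\gamma^* )}h_2^{1+\gamma(m_1-1)}$; $C_1(h_1,h_2)=C_3(h_2)+\frac{2(1-\gamma^* )}{\kappa^2(m_1-m_2)m_1(m_1-1)(m_1-\gamma^* )}h_1^{1+\gamma(m_1-1)}$; $C_2(h_1)=\frac{1-\gamma^*}{(m_1-m_2)(m_2-\gamma^* )}\big(\frac{m_1(\alpha\delta-1)}{\delta}z_\alpha^{-m_2}+\frac{m_1-1}{r}z_\alpha^{1-m_2}\big)h_1^{1+\gamma(m_2-1)}$; $C_4(h_1)=C_2(h_1)-\frac{2(\gamma^*-1)}{\kappa^2(m_1-m_2)m_2(m_2-1)(m_2-\gamma^* )}h_1^{1+\gamma(m_2-1)}$; $C_6(h_1,h_2)=C_4(h_1)-\frac{2(1-\gamma^* )}{\kappa^2(m_1-m_2)m_2(m_2-1)(m_2-\gamma^* )}h_2^{1+\gamma(m_2-1)}$. Boundary curves: $x_{\rm lavs}=-m_1C_1(h_1,h_2)(z_\alpha h_1^{-\gamma})^{m_1-1}-m_2C_2(h_1)(z_\alpha h_1^{-\gamma})^{m_2-1}+\frac{h_1}{r}$; $x_{\rm peak}=-m_1C_1(h_1,h_2)(h_1^{-\gamma})^{m_1-1}-m_2C_2(h_1)(h_1^{-\gamma})^{m_2-1}+\frac{h_1}{r}$;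 $x_{\rm valy}=-m_1C_5(h_2)(h_2^{-\gamma})^{m_1-1}-m_2C_6(h_1,h_2)(h_2^{-\gamma})^{m_2-1}+\frac{h_2}{r}$; $x_{\rm gloom}=-m_1C_5(h_2)(z_\beta h_2^{-\gamma})^{m_1-1}-m_2C_6(h_1,h_2)(z_\beta h_2^{-\gamma})^{m_2-1}+\frac{h_2}{r}$. The optimal feedback consumption $c^*(x,h_1,h_2)$ (for the problem of maximizing $\mathbb E[\int_0^\infty e^{-\delta t}(U(c_t)dt-\alpha dV^+_{1t}-\beta dV^-_{2t})]$ with $U=V=x^{1-\gamma}/(1-\gamma)$, $V^+_{1t}=V(h_1\vee\sup_{s\le t}c_s)-V(h_1)$, $V^-_{2t}=V(h_2)-V(h_2\wedge\inf_{s\le t}c_s)$, over consumption/investment strategies with wealth $dX=(rX+(\mu-r)\pi-c)dt+\sigma\pi dW$, $X\ge0$) satisfies $c^*(x,h_1,h_2)=h_1$ for $x_{\rm peak}<x\le x_{\rm lavs}$ and $c^*(x,h_1,h_2)=h_2$ for $x_{\rm gloom}\le x<x_{\rm valy}$. *)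

(* Defs.v *)
From Stdlib Require Import Reals ClassicalEpsilon.
From Coquelicot Require Import Coquelicot.
Open Scope R_scope.

Definition kappa (r mu sigma : R) : R := (mu - r) / sigma.

Definition gstar (g : R) : R := - (1 - g) / g.

Definition K0 (r mu sigma delta g : R) : R :=
  r + (delta - r) / g + (g - 1) / (2 * g ^ 2) * (kappa r mu sigma) ^ 2.

(* m1 > m2 : the two roots of (k^2/2) m^2 + (delta - r - k^2/2) m - delta = 0 *)
Definition qa (r mu sigma : R) : R := (kappa r mu sigma) ^ 2 / 2.
Definition qb (r mu sigma delta : R) : R := delta - r - (kappa r mu sigma) ^ 2 / 2.
Definition qdisc (r mu sigma delta : R) : R :=
  (qb r mu sigma delta) ^ 2 + 4 * qa r mu sigma * delta.
Definition m1 (r mu sigma delta : R) : R :=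
  (- qb r mu sigma delta + sqrt (qdisc r mu sigma delta)) / (2 * qa r mu sigma).
Definition m2 (r mu sigma delta : R) : R :=
  (- qb r mu sigma delta - sqrt (qdisc r mu sigma delta)) / (2 * qa r mu sigma).

Definition zalpha_prop (r mu sigma delta alpha z : R) : Prop :=
  let k := kappa r mu sigma in
  let a1 := m1 r mu sigma delta in
  let a2 := m2 r mu sigma delta in
  0 < z /\ z <= 1 - alpha * delta /\
  2 / (k ^ 2 * a1 * (a1 - 1)) * Rpower z a1 + z / r * (a2 - 1)
    + a2 * (alpha - 1 / delta) = 0.

Definition zalpha (r mu sigma delta alpha : R) : R :=
  epsilon (inhabits 0) (zalpha_prop r mu sigma delta alpha).

Definition zbeta_prop (r mu sigma delta beta z : R) : Prop :=
  let k := kappa r mu sigma in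
  let a1 := m1 r mu sigma delta in
  let a2 := m2 r mu sigma delta in
  1 + beta * delta <= z /\
  2 / (k ^ 2 * a2 * (a2 - 1)) * Rpower z a2 + z / r * (a1 - 1)
    - a1 * (beta + 1 / delta) = 0.

Definition zbeta (r mu sigma delta beta : R) : R :=
  epsilon (inhabits 0) (zbeta_prop r mu sigma delta beta).

Section Coeffs.
Variables (r mu sigma delta g alpha beta : R).
Let k := kappa r mu sigma.
Let a1 := m1 r mu sigma delta.
Let a2 := m2 r mu sigma delta.
Let gs := gstar g.
Let za := zalpha r mu sigma delta alpha.
Let zb := zbeta r mu sigma delta beta.

Definition C5 (h2 : R) : R :=
  (1 - gs) / ((a1 - a2) * (a1 - gs)) *
  (a2 * (beta * delta + 1) / delta * Rpower zb (- a1)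
   + (1 - a2) / r * Rpower zb (1 - a1)) * Rpower h2 (1 + g * (a1 - 1)).

Definition C3 (h2 : R) : R :=
  C5 h2 + 2 * (gs - 1) / (k ^ 2 * (a1 - a2) * a1 * (a1 - 1) * (a1 - gs))
          * Rpower h2 (1 + g * (a1 - 1)).

Definition C1 (h1 h2 : R) : R :=
  C3 h2 + 2 * (1 - gs) / (k ^ 2 * (a1 - a2) * a1 * (a1 - 1) * (a1 - gs))
          * Rpower h1 (1 + g * (a1 - 1)).

Definition C2 (h1 : R) : R :=
  (1 - gs) / ((a1 - a2) * (a2 - gs)) *
  (a1 * (alpha * delta - 1) / delta * Rpower za (- a2)
   + (a1 - 1) / r * Rpower za (1 - a2)) * Rpower h1 (1 + g * (a2 - 1)).

Definition C4 (h1 : R) : R :=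
  C2 h1 - 2 * (gs - 1) / (k ^ 2 * (a1 - a2) * a2 * (a2 - 1) * (a2 - gs))
          * Rpower h1 (1 + g * (a2 - 1)).

Definition C6 (h1 h2 : R) : R :=
  C4 h1 - 2 * (1 - gs) / (k ^ 2 * (a1 - a2) * a2 * (a2 - 1) * (a2 - gs))
          * Rpower h2 (1 + g * (a2 - 1)).

Definition x_lavs (h1 h2 : R) : R :=
  - a1 * C1 h1 h2 * Rpower (za * Rpower h1 (- g)) (a1 - 1)
  - a2 * C2 h1 * Rpower (za * Rpower h1 (- g)) (a2 - 1) + h1 / r.

Definition x_peak (h1 h2 : R) : R :=
  - a1 * C1 h1 h2 * Rpower (Rpower h1 (- g)) (a1 - 1)
  - a2 * C2 h1 * Rpower (Rpower h1 (- g)) (a2 - 1) + h1 / r.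

Definition x_valy (h1 h2 : R) : R :=
  - a1 * C5 h2 * Rpower (Rpower h2 (- g)) (a1 - 1)
  - a2 * C6 h1 h2 * Rpower (Rpower h2 (- g)) (a2 - 1) + h2 / r.

Definition x_gloom (h1 h2 : R) : R :=
  - a1 * C5 h2 * Rpower (zb * Rpower h2 (- g)) (a1 - 1)
  - a2 * C6 h1 h2 * Rpower (zb * Rpower h2 (- g)) (a2 - 1) + h2 / r.

End Coeffs.

(* Main.v *)
Require Import Defs.
From Stdlib Require Import Reals Lra Psatz ClassicalEpsilon.
From Coquelicot Require Import Coquelicot.
Open Scope R_scope.

Lemma roots_facts (r mu sigma delta : R) :
  0 < r -> 0 < sigma -> 0 < delta -> mu <> r ->
  0 < qa r mu sigma /\ 1 < m1 r mu sigma delta /\ m2 r mu sigma delta < 0 /\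
  kappa r mu sigma ^ 2 = 2 * qa r mu sigma /\
  qb r mu sigma delta = delta - r - qa r mu sigma /\
  qa r mu sigma * m1 r mu sigma delta ^ 2 + qb r mu sigma delta * m1 r mu sigma delta - delta = 0 /\
  qa r mu sigma * m2 r mu sigma delta ^ 2 + qb r mu sigma delta * m2 r mu sigma delta - delta = 0.
Proof.
  intros hr hs hd hmu.
  assert (hk : kappa r mu sigma <> 0).
  { unfold kappa. intro h. apply hmu. 
    assert (mu - r = 0). { apply (Rmult_eq_reg_r (/ sigma)). lra. apply Rinv_neq_0_compat; lra. }
    lra. }
  assert (hA : 0 < qa r mu sigma).
  { unfold qa. pose proof (Rsqr_pos_lt _ hk). unfold Rsqr in H. simpl. lra. }
  assert (hk2 : kappa r mu sigma ^ 2 = 2 * qa r mu sigma) by (unfold qa; field).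
  assert (hqb : qb r mu sigma delta = delta - r - qa r mu sigma) by (unfold qb, qa; field).
  unfold m1, m2.
  set (A := qa r mu sigma) in *.
  unfold qdisc. fold A.
  set (b := qb r mu sigma delta) in *.
  assert (hD : 0 <= b^2 + 4*A*delta) by nra.
  set (s := sqrt (b^2 + 4*A*delta)).
  assert (hs2 : s * s = b^2 + 4*A*delta) by (apply sqrt_sqrt; lra).
  assert (hs0 : 0 <= s) by apply sqrt_pos.
  assert (e1 : (-b + s)/(2*A) * (2*A) = -b + s) by (field; lra).
  assert (e2 : (-b - s)/(2*A) * (2*A) = -b - s) by (field; lra).
  set (a1 := (-b + s)/(2*A)) in *. set (a2 := (-b - s)/(2*A)) in *.
  assert (sgt1 : s > b + 2*A) by nra.
  assert (sgt2 : s > b) by nra.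
  assert (sgt3 : s > - b) by nra.
  repeat split; try lra.
  - nra.
  - nra.
  - assert (4*A*(A*a1^2 + b*a1 - delta) = 0) by nra. nra.
  - assert (4*A*(A*a2^2 + b*a2 - delta) = 0) by nra. nra.
Qed.

Lemma vieta (A b a1 a2 r delta : R) : 0 < A -> b = delta - r - A ->
  A * a1 ^ 2 + b * a1 - delta = 0 -> A * a2 ^ 2 + b * a2 - delta = 0 -> a2 < a1 ->
  r = - A * (a1 - 1) * (a2 - 1) /\ A * a1 * a2 = - delta.
Proof.
  intros hA hb h1 h2 h12.
  assert (hs : A * (a1 + a2) = - b).
  { assert ((a1 - a2) * (A * (a1 + a2) + b) = 0) by nra.
    apply Rmult_integral in H. destruct H; lra. }
  split; nra.
Qed.

Lemma Rp_pos x y : 0 < Rpower x y.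
Proof. unfold Rpower; apply exp_pos. Qed.

Lemma Rp_one y : Rpower 1 y = 1.
Proof. unfold Rpower; rewrite ln_1, Rmult_0_r, exp_0; reflexivity. Qed.

Lemma exp_le' a b : a <= b -> exp a <= exp b.
Proof. intros [h|h]. left; apply exp_increasing; auto. subst; lra. Qed.

Lemma Rp_le_base_neg a b c : c <= 0 -> 0 < a <= b -> Rpower b c <= Rpower a c.
Proof.
  intros hc [ha hb]. unfold Rpower. apply exp_le'.
  pose proof (ln_le a b ha hb). nra.
Qed.

Lemma Rp_le_base_pos a b c : 0 <= c -> 0 < a <= b -> Rpower a c <= Rpower b c.
Proof. intros; apply Rle_Rpower_l; auto. Qed.

Lemma ln_lt_sub1 y : 1 < y -> ln y < y - 1.
Proof.
  intros hy. pose proof (exp_ineq1 (y - 1)) as H.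
  assert (0 < y - 1) by lra. assert (y - 1 <> 0) by lra. specialize (H H1).
  rewrite <- (ln_exp (y - 1)). apply ln_increasing; lra.
Qed.

Lemma bern1 a z : 1 < a -> 0 < z < 1 -> Rpower z a - a * z + (a - 1) > 0.
Proof.
  intros ha [hz0 hz1].
  replace (Rpower z a) with (z * Rpower z (a - 1)).
  2:{ replace a with (1 + (a - 1)) at 2 by ring. rewrite Rpower_plus, Rpower_1; auto. }
  assert (h1 : 1 + (a - 1) * ln z <= Rpower z (a - 1)) by (unfold Rpower; apply exp_ineq1_le).
  assert (h2 : ln (/ z) < / z - 1).
  { apply ln_lt_sub1. rewrite <- Rinv_1. apply Rinv_lt_contravar; lra. }
  rewrite ln_Rinv in h2 by lra.
  assert (h3 : z * ln z > z - 1).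
  { assert (z * (- ln z) < z * (/ z - 1)) by (apply Rmult_lt_compat_l; lra).
    replace (z * (/ z - 1)) with (1 - z) in H by (field; lra). lra. }
  assert (h4 : z * Rpower z (a - 1) >= z * (1 + (a - 1) * ln z)) by (apply Rle_ge, Rmult_le_compat_l; lra).
  nra.
Qed.

Lemma bern2 a z : a < 0 -> 1 < z -> Rpower z a - a * z + (a - 1) > 0.
Proof.
  intros ha hz.
  assert (h1 : 1 + a * ln z <= Rpower z a) by (unfold Rpower; apply exp_ineq1_le).
  pose proof (ln_lt_sub1 z hz). nra.
Qed.

Lemma scale_a (k A a1 a2 r delta alpha z : R) : k ^ 2 = 2 * A -> 0 < A ->
  r = - A * (a1 - 1) * (a2 - 1) -> A * a1 * a2 = - delta -> 1 < a1 -> a2 < 0 ->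
  (2 / (k ^ 2 * a1 * (a1 - 1)) * Rpower z a1 + z / r * (a2 - 1) + a2 * (alpha - 1 / delta))
    * (A * a1 * (a1 - 1)) = Rpower z a1 - a1 * z + (a1 - 1) * (1 - alpha * delta).
Proof.
  intros hk hA hr hd h1 h2. rewrite hk. subst r.
  assert (hd' : delta = - (A * a1 * a2)) by lra. subst delta.
  field. repeat split; try lra; nra.
Qed.

Lemma scale_b (k A a1 a2 r delta beta z : R) : k ^ 2 = 2 * A -> 0 < A ->
  r = - A * (a1 - 1) * (a2 - 1) -> A * a1 * a2 = - delta -> 1 < a1 -> a2 < 0 ->
  (2 / (k ^ 2 * a2 * (a2 - 1)) * Rpower z a2 + z / r * (a1 - 1) - a1 * (beta + 1 / delta))
    * (A * a2 * (a2 - 1)) = Rpower z a2 - a2 * z + (a2 - 1) * (1 + beta * delta).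
Proof.
  intros hk hA hr hd h1 h2. rewrite hk. subst r.
  assert (hd' : delta = - (A * a1 * a2)) by lra. subst delta.
  field. repeat split; try lra; nra.
Qed.

Lemma cont_S s a c z : 0 < z -> continuity_pt (fun x => s * (Rpower x a - a * x + c)) z.
Proof.
  intros hz.
  assert (H : ex_derive (fun x => s * (Rpower x a - a * x + c)) z).
  { unfold Rpower. auto_derive. lra. }
  apply continuity_pt_filterlim. exact (ex_derive_continuous _ _ H).
Qed.

Lemma exist_a a1 w : 1 < a1 -> 0 < w <= 1 ->
  exists z, 0 < z <= w /\ Rpower z a1 - a1 * z + (a1 - 1) * w = 0.
Proof.
  intros ha hw.
  assert (hSw : Rpower w a1 - a1 * w + (a1 - 1) * w <= 0).
  { replace (Rpower w a1) with (w * Rpower w (a1 - 1)).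
    2:{ replace a1 with (1 + (a1 - 1)) at 2 by ring. rewrite Rpower_plus, Rpower_1; lra. }
    assert (Rpower w (a1 - 1) <= 1).
    { apply Rle_trans with (Rpower 1 (a1 - 1)); [apply Rp_le_base_pos; lra | rewrite Rp_one; lra]. }
    nra. }
  destruct (Req_dec (Rpower w a1 - a1 * w + (a1 - 1) * w) 0) as [e|ne].
  { exists w; split; [lra|exact e]. }
  set (eps := (a1 - 1) * w / (2 * a1)).
  assert (he0 : 0 < eps) by (unfold eps; apply Rdiv_lt_0_compat; nra).
  assert (he1 : eps < w).
  { unfold eps. apply (Rmult_lt_reg_r (2 * a1)). lra.
    unfold Rdiv. rewrite Rmult_assoc, Rinv_l by lra. nra. }
  assert (hSe : 0 < Rpower eps a1 - a1 * eps + (a1 - 1) * w).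
  { pose proof (Rp_pos eps a1).
    assert (a1 * eps = (a1 - 1) * w / 2) by (unfold eps; field; lra). nra. }
  destruct (Ranalysis5.IVT_interv (fun x => -1 * (Rpower x a1 - a1 * x + (a1 - 1) * w)) eps w)
    as [z [hz1 hz2]].
  - intros x hx. apply cont_S. lra.
  - exact he1.
  - lra.
  - lra.
  - exists z. split; [lra|]. lra.
Qed.

Lemma exist_b a2 v : a2 < 0 -> 1 <= v ->
  exists z, v <= z /\ Rpower z a2 - a2 * z + (a2 - 1) * v = 0.
Proof.
  intros ha hv.
  assert (hTv : Rpower v a2 - a2 * v + (a2 - 1) * v <= 0).
  { assert (Rpower v a2 <= 1).
    { apply Rle_trans with (Rpower 1 a2); [apply Rp_le_base_neg; lra | rewrite Rp_one; lra]. }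
    nra. }
  destruct (Req_dec (Rpower v a2 - a2 * v + (a2 - 1) * v) 0) as [e|ne].
  { exists v; split; [lra|exact e]. }
  set (Z := v * (1 - a2) / (- a2) + 1).
  assert (hZ : v < Z).
  { unfold Z. assert (v <= v * (1 - a2) / (- a2)).
    { apply (Rmult_le_reg_r (- a2)). lra. unfold Rdiv. rewrite Rmult_assoc, Rinv_l by lra. nra. }
    lra. }
  assert (hTZ : 0 < Rpower Z a2 - a2 * Z + (a2 - 1) * v).
  { pose proof (Rp_pos Z a2).
    assert (- a2 * Z = v * (1 - a2) - a2) by (unfold Z; field; lra). nra. }
  destruct (Ranalysis5.IVT_interv (fun x => 1 * (Rpower x a2 - a2 * x + (a2 - 1) * v)) v Z)
    as [z [hz1 hz2]].
  - intros x hx. apply cont_S. lra.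
  - exact hZ.
  - lra.
  - lra.
  - exists z. split; [lra|]. lra.
Qed.

Lemma uniq_a a1 z : 1 < a1 -> 0 < z <= 1 -> Rpower z a1 - a1 * z + (a1 - 1) * 1 = 0 -> z = 1.
Proof.
  intros ha hz e. destruct (Req_dec z 1) as [h|h]; auto.
  pose proof (bern1 a1 z ha ltac:(lra)). lra.
Qed.

Lemma uniq_b a2 z : a2 < 0 -> 1 <= z -> Rpower z a2 - a2 * z + (a2 - 1) * 1 = 0 -> z = 1.
Proof.
  intros ha hz e. destruct (Req_dec z 1) as [h|h]; auto.
  pose proof (bern2 a2 z ha ltac:(lra)). lra.
Qed.

Lemma base (r mu sigma delta : R) :
  0 < r -> 0 < sigma -> 0 < delta -> mu <> r ->
  0 < qa r mu sigma /\ 1 < m1 r mu sigma delta /\ m2 r mu sigma delta < 0 /\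
  kappa r mu sigma ^ 2 = 2 * qa r mu sigma /\
  r = - qa r mu sigma * (m1 r mu sigma delta - 1) * (m2 r mu sigma delta - 1) /\
  qa r mu sigma * m1 r mu sigma delta * m2 r mu sigma delta = - delta /\
  qa r mu sigma * m1 r mu sigma delta ^ 2 + (delta - r - qa r mu sigma) * m1 r mu sigma delta - delta = 0 /\
  qa r mu sigma * m2 r mu sigma delta ^ 2 + (delta - r - qa r mu sigma) * m2 r mu sigma delta - delta = 0.
Proof.
  intros hr hs hd hmu.
  destruct (roots_facts r mu sigma delta hr hs hd hmu) as (hA & h1 & h2 & hk & hb & q1 & q2).
  destruct (vieta _ _ _ _ _ _ hA hb q1 q2 ltac:(lra)) as [v1 v2].
  rewrite hb in q1, q2. repeat split; auto.
Qed.

Lemma za_iff (r mu sigma delta alpha z : R) :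
  0 < r -> 0 < sigma -> 0 < delta -> mu <> r ->
  zalpha_prop r mu sigma delta alpha z <->
  (0 < z /\ z <= 1 - alpha * delta /\
   Rpower z (m1 r mu sigma delta) - m1 r mu sigma delta * z
     + (m1 r mu sigma delta - 1) * (1 - alpha * delta) = 0).
Proof.
  intros hr hs hd hmu.
  destruct (base r mu sigma delta hr hs hd hmu) as (hA & h1 & h2 & hk & hrr & hdd & _ & _).
  pose proof (scale_a (kappa r mu sigma) _ _ _ _ _ alpha z hk hA hrr hdd h1 h2) as E.
  unfold zalpha_prop; cbv zeta.
  assert (hP : 0 < qa r mu sigma * m1 r mu sigma delta * (m1 r mu sigma delta - 1)).
  { apply Rmult_lt_0_compat; [apply Rmult_lt_0_compat|]; lra. }
  split.
  - intros (a & b & c). rewrite c, Rmult_0_l in E. split; [|split]; auto.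
  - intros (a & b & c). split; [|split]; auto. rewrite c in E.
    apply Rmult_integral in E. destruct E; auto. lra.
Qed.

Lemma zb_iff (r mu sigma delta beta z : R) :
  0 < r -> 0 < sigma -> 0 < delta -> mu <> r ->
  zbeta_prop r mu sigma delta beta z <->
  (1 + beta * delta <= z /\
   Rpower z (m2 r mu sigma delta) - m2 r mu sigma delta * z
     + (m2 r mu sigma delta - 1) * (1 + beta * delta) = 0).
Proof.
  intros hr hs hd hmu.
  destruct (base r mu sigma delta hr hs hd hmu) as (hA & h1 & h2 & hk & hrr & hdd & _ & _).
  pose proof (scale_b (kappa r mu sigma) _ _ _ _ _ beta z hk hA hrr hdd h1 h2) as E.
  unfold zbeta_prop; cbv zeta.
  assert (hP : 0 < qa r mu sigma * m2 r mu sigma delta * (m2 r mu sigma delta - 1)).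
  { replace (qa r mu sigma * m2 r mu sigma delta * (m2 r mu sigma delta - 1)) with
      ((qa r mu sigma * (- m2 r mu sigma delta)) * (1 - m2 r mu sigma delta)) by ring.
    apply Rmult_lt_0_compat; [apply Rmult_lt_0_compat|]; lra. }
  split.
  - intros (a & c). rewrite c, Rmult_0_l in E. split; auto.
  - intros (a & c). split; auto. rewrite c in E.
    apply Rmult_integral in E. destruct E; auto. lra.
Qed.

Lemma za_spec (r mu sigma delta alpha : R) :
  0 < r -> 0 < sigma -> 0 < delta -> mu <> r -> 0 <= alpha -> alpha < 1 / delta ->
  zalpha_prop r mu sigma delta alpha (zalpha r mu sigma delta alpha).
Proof.
  intros hr hs hd hmu ha0 ha1. unfold zalpha. apply epsilon_spec.
  destruct (base r mu sigma delta hr hs hd hmu) as (hA & h1 & h2 & _).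
  assert (hw : 0 < 1 - alpha * delta <= 1).
  { split; [|nra]. assert (alpha * delta < 1 / delta * delta) by (apply Rmult_lt_compat_r; lra).
    replace (1 / delta * delta) with 1 in H by (field; lra). lra. }
  destruct (exist_a _ _ h1 hw) as [z [hz e]].
  exists z. apply za_iff; auto. lra.
Qed.

Lemma zb_spec (r mu sigma delta beta : R) :
  0 < r -> 0 < sigma -> 0 < delta -> mu <> r -> 0 <= beta ->
  zbeta_prop r mu sigma delta beta (zbeta r mu sigma delta beta).
Proof.
  intros hr hs hd hmu hb0. unfold zbeta. apply epsilon_spec.
  destruct (base r mu sigma delta hr hs hd hmu) as (hA & h1 & h2 & _).
  assert (hv : 1 <= 1 + beta * delta) by nra.
  destruct (exist_b _ _ h2 hv) as [z [hz e]].
  exists z. apply zb_iff; auto.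
Qed.

Lemma za0 (r mu sigma delta : R) :
  0 < r -> 0 < sigma -> 0 < delta -> mu <> r -> zalpha r mu sigma delta 0 = 1.
Proof.
  intros hr hs hd hmu.
  assert (h0 : 0 < 1 / delta) by (apply Rdiv_lt_0_compat; lra).
  pose proof (za_spec r mu sigma delta 0 hr hs hd hmu (Rle_refl 0) h0) as H.
  apply za_iff in H; auto.
  destruct (base r mu sigma delta hr hs hd hmu) as (hA & h1 & h2 & _).
  destruct H as (a & b & c). replace (1 - 0 * delta) with 1 in * by ring.
  apply (uniq_a (m1 r mu sigma delta)); auto.
Qed.

Lemma zb0 (r mu sigma delta : R) :
  0 < r -> 0 < sigma -> 0 < delta -> mu <> r -> zbeta r mu sigma delta 0 = 1.
Proof.
  intros hr hs hd hmu.
  pose proof (zb_spec r mu sigma delta 0 hr hs hd hmu (Rle_refl 0)) as H.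
  apply zb_iff in H; auto.
  destruct (base r mu sigma delta hr hs hd hmu) as (hA & h1 & h2 & _).
  destruct H as (b & c). replace (1 + 0 * delta) with 1 in * by ring.
  apply (uniq_b (m2 r mu sigma delta)); auto.
Qed.

Definition small (f : R -> R) := exists K M, forall g, M < g -> Rabs (f g) <= K / g.

Lemma small_plus f1 f2 : small f1 -> small f2 -> small (fun g => f1 g + f2 g).
Proof.
  intros [K1 [M1 H1]] [K2 [M2 H2]]. exists (K1 + K2), (Rmax (Rmax M1 M2) 0).
  intros g hg. pose proof (Rmax_l (Rmax M1 M2) 0). pose proof (Rmax_r (Rmax M1 M2) 0).
  pose proof (Rmax_l M1 M2). pose proof (Rmax_r M1 M2).
  specialize (H1 g ltac:(lra)). specialize (H2 g ltac:(lra)).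
  eapply Rle_trans. apply Rabs_triang.
  replace ((K1 + K2) / g) with (K1 / g + K2 / g) by (field; lra). lra.
Qed.

Lemma small_scal c f : small f -> small (fun g => c * f g).
Proof.
  intros [K [M H]]. exists (Rabs c * K), (Rmax M 0).
  intros g hg. pose proof (Rmax_l M 0). pose proof (Rmax_r M 0).
  specialize (H g ltac:(lra)). rewrite Rabs_mult.
  replace (Rabs c * K / g) with (Rabs c * (K / g)) by (field; lra).
  apply Rmult_le_compat_l; auto. apply Rabs_pos.
Qed.

Lemma small_ext f f' : (forall g, 1 < g -> f g = f' g) -> small f' -> small f.
Proof.
  intros E [K [M H]]. exists K, (Rmax M 1). intros g hg.
  pose proof (Rmax_l M 1). pose proof (Rmax_r M 1).
  rewrite E by lra. apply H. lra.
Qed.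

Lemma small_lim f l : small (fun g => f g - l) -> filterlim f (Rbar_locally p_infty) (locally l).
Proof.
  intros [K [M H]]. apply filterlim_locally. intros eps.
  exists (Rmax (Rmax M 1) (Rabs K / eps)). intros g hg.
  pose proof (Rmax_l (Rmax M 1) (Rabs K / eps)). pose proof (Rmax_r (Rmax M 1) (Rabs K / eps)).
  pose proof (Rmax_l M 1). pose proof (Rmax_r M 1).
  pose proof (cond_pos eps) as he.
  specialize (H g ltac:(lra)).
  change (Rabs (f g - l) < eps).
  assert (K / g <= Rabs K / g).
  { unfold Rdiv. apply Rmult_le_compat_r. left; apply Rinv_0_lt_compat; lra. apply Rle_abs. }
  assert (Rabs K / g < eps).
  { apply (Rmult_lt_reg_r g). lra. unfold Rdiv. rewrite Rmult_assoc, Rinv_l, Rmult_1_r by lra.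
    assert (Rabs K / eps * eps = Rabs K) by (field; lra).
    assert (Rabs K / eps * eps < g * eps). apply Rmult_lt_compat_r; lra.
    lra. }
  lra.
Qed.

Definition cA (N X a g : R) := N * (1 - gstar g) / (X * (a - gstar g)).

Lemma one_gs g : 0 < g -> 1 - gstar g = / g.
Proof. intros; unfold gstar; field; lra. Qed.

Lemma small_term N X a m (HY : R -> R) Hb :
  X <> 0 -> 0 < m -> (forall g, 1 < g -> m <= Rabs (a - gstar g)) ->
  (forall g, 1 < g -> 0 <= HY g <= Hb) -> small (fun g => cA N X a g * HY g).
Proof.
  intros hX hm Hm HH. exists (Rabs N / (Rabs X * m) * Hb), 1. intros g hg.
  specialize (Hm g hg). specialize (HH g hg).
  assert (hX' : 0 < Rabs X) by (apply Rabs_pos_lt; auto).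
  assert (hag : a - gstar g <> 0).
  { intro e. rewrite e, Rabs_R0 in Hm. lra. }
  unfold cA. rewrite one_gs by lra.
  rewrite Rabs_mult. rewrite (Rabs_pos_eq (HY g)) by lra.
  replace (N * / g / (X * (a - gstar g))) with (N * / (X * (a - gstar g)) * / g) by (field; lra).
  rewrite !Rabs_mult, (Rabs_pos_eq (/ g)) by (left; apply Rinv_0_lt_compat; lra).
  rewrite Rabs_inv, Rabs_mult.
  assert (0 <= Rabs N) by apply Rabs_pos.
  assert (hinv : / (Rabs X * Rabs (a - gstar g)) <= / (Rabs X * m)).
  { apply Rinv_le_contravar. nra. apply Rmult_le_compat_l; lra. }
  assert (hig : 0 < / g) by (apply Rinv_0_lt_compat; lra).
  assert (hi2 : 0 < / (Rabs X * m)) by (apply Rinv_0_lt_compat; nra).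
  assert (hi3 : 0 < / (Rabs X * Rabs (a - gstar g))) by (apply Rinv_0_lt_compat; nra).
  unfold Rdiv.
  apply Rle_trans with (Rabs N * / (Rabs X * m) * / g * HY g).
  - apply Rmult_le_compat_r; [lra|]. apply Rmult_le_compat_r; [lra|]. apply Rmult_le_compat_l; lra.
  - replace (Rabs N * / (Rabs X * m) * Hb * / g) with (Rabs N * / (Rabs X * m) * / g * Hb) by ring.
    apply Rmult_le_compat_l; [|lra]. apply Rmult_le_pos; [apply Rmult_le_pos|]; lra.
Qed.

Lemma gs_bounds g : 1 < g -> 0 < gstar g < 1.
Proof.
  intros hg. unfold gstar. split.
  - replace (- (1 - g) / g) with ((g - 1) / g) by (field; lra). apply Rdiv_lt_0_compat; lra.
  - replace (- (1 - g) / g) with (1 - / g) by (field; lra).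
    assert (0 < / g) by (apply Rinv_0_lt_compat; lra). lra.
Qed.

Lemma m_a1 a1 g : 1 < a1 -> 1 < g -> a1 - 1 <= Rabs (a1 - gstar g).
Proof. intros; pose proof (gs_bounds g H0). rewrite Rabs_pos_eq; lra. Qed.

Lemma m_a2 a2 g : a2 < 0 -> 1 < g -> - a2 <= Rabs (a2 - gstar g).
Proof. intros; pose proof (gs_bounds g H0). rewrite Rabs_left; lra. Qed.

Definition HY (hx z hy a g : R) := Rpower hx (1 + g * (a - 1)) * Rpower (z * Rpower hy (- g)) (a - 1).

Lemma HY_eq hx z hy a g : 0 < z -> 0 < hy ->
  HY hx z hy a g = Rpower z (a - 1) * (Rpower hx (1 + g * (a - 1)) * Rpower hy (- g * (a - 1))).
Proof.
  intros hz hy'. unfold HY. rewrite <- Rpower_mult_distr by (auto; apply Rp_pos).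
  rewrite Rpower_mult. ring.
Qed.

Lemma HY_b1 hx z hy a g : 0 < z -> 0 < hx <= hy -> 1 < a -> 0 < g ->
  0 <= HY hx z hy a g <= Rpower z (a - 1) * hy.
Proof.
  intros hz hh ha hg. split.
  - unfold HY. apply Rmult_le_pos; left; apply Rp_pos.
  - rewrite HY_eq by lra. apply Rmult_le_compat_l. left; apply Rp_pos.
    apply Rle_trans with (Rpower hy (1 + g * (a - 1)) * Rpower hy (- g * (a - 1))).
    + apply Rmult_le_compat_r. left; apply Rp_pos. apply Rle_Rpower_l; nra.
    + rewrite <- Rpower_plus. replace (1 + g * (a - 1) + - g * (a - 1)) with 1 by ring.
      rewrite Rpower_1; lra.
Qed.

Lemma HY_b2 hx z hy a g : 0 < z -> 0 < hy <= hx -> a < 0 -> 0 < g ->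
  0 <= HY hx z hy a g <= Rpower z (a - 1) * hx.
Proof.
  intros hz hh ha hg. split.
  - unfold HY. apply Rmult_le_pos; left; apply Rp_pos.
  - rewrite HY_eq by lra. apply Rmult_le_compat_l. left; apply Rp_pos.
    apply Rle_trans with (Rpower hx (1 + g * (a - 1)) * Rpower hx (- g * (a - 1))).
    + apply Rmult_le_compat_l. left; apply Rp_pos. apply Rle_Rpower_l; nra.
    + rewrite <- Rpower_plus. replace (1 + g * (a - 1) + - g * (a - 1)) with 1 by ring.
      rewrite Rpower_1; lra.
Qed.

Lemma cA_sign_pos N X a g : 1 < g -> 0 <= N / (X * (a - gstar g)) -> 0 <= cA N X a g.
Proof.
  intros hg h. unfold cA. rewrite one_gs by lra.
  replace (N * / g / (X * (a - gstar g))) with (/ g * (N / (X * (a - gstar g)))) by (unfold Rdiv; ring).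
  apply Rmult_le_pos; auto. left; apply Rinv_0_lt_compat; lra.
Qed.

Lemma cA_sign_neg N X a g : 1 < g -> N / (X * (a - gstar g)) <= 0 -> cA N X a g <= 0.
Proof.
  intros hg h. unfold cA. rewrite one_gs by lra.
  replace (N * / g / (X * (a - gstar g))) with (/ g * (N / (X * (a - gstar g)))) by (unfold Rdiv; ring).
  assert (0 < / g) by (apply Rinv_0_lt_compat; lra). nra.
Qed.

Lemma BC_nonneg r delta A a1 a2 beta zb : 0 < r -> 0 < delta -> 0 < A -> a2 < 0 ->
  A * a2 ^ 2 + (delta - r - A) * a2 - delta = 0 -> 0 <= beta -> 1 + beta * delta <= zb ->
  0 <= a2 * (beta * delta + 1) / delta * Rpower zb (- a1) + (1 - a2) / r * Rpower zb (1 - a1).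
Proof.
  intros hr hd hA ha2 q hb hzb.
  assert (hz : 0 < zb) by nra.
  replace (Rpower zb (1 - a1)) with (zb * Rpower zb (- a1)).
  2:{ replace (1 - a1) with (1 + - a1) by ring. rewrite Rpower_plus, Rpower_1; auto. }
  pose proof (Rp_pos zb (- a1)) as hp.
  replace (a2 * (beta * delta + 1) / delta * Rpower zb (- a1) + (1 - a2) / r * (zb * Rpower zb (- a1)))
    with (Rpower zb (- a1) * ((a2 * (beta * delta + 1) * r + (1 - a2) * zb * delta) / (r * delta)))
    by (field; lra).
  apply Rmult_le_pos; [lra|]. apply Rdiv_le_0_compat; [|nra].
  assert (h1 : delta - a2 * (delta - r) > 0) by nra.
  assert (h2 : (1 - a2) * delta * (zb - (1 + beta * delta)) >= 0).
  { apply Rle_ge. apply Rmult_le_pos; [|lra]. nra. }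
  assert (h3 : (1 + beta * delta) * (delta - a2 * (delta - r)) >= 0).
  { apply Rle_ge, Rmult_le_pos; nra. }
  assert (e : a2 * (beta * delta + 1) * r + (1 - a2) * zb * delta =
     (1 - a2) * delta * (zb - (1 + beta * delta)) + (1 + beta * delta) * (delta - a2 * (delta - r))) by ring.
  lra.
Qed.

Lemma DC_nonpos r delta A a1 a2 alpha za : 0 < r -> 0 < delta -> 0 < A -> 1 < a1 ->
  A * a1 ^ 2 + (delta - r - A) * a1 - delta = 0 -> 0 < za -> za <= 1 - alpha * delta ->
  a1 * (alpha * delta - 1) / delta * Rpower za (- a2) + (a1 - 1) / r * Rpower za (1 - a2) <= 0.
Proof.
  intros hr hd hA ha1 q hz hzw.
  replace (Rpower za (1 - a2)) with (za * Rpower za (- a2)).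
  2:{ replace (1 - a2) with (1 + - a2) by ring. rewrite Rpower_plus, Rpower_1; auto. }
  pose proof (Rp_pos za (- a2)) as hp.
  replace (a1 * (alpha * delta - 1) / delta * Rpower za (- a2) + (a1 - 1) / r * (za * Rpower za (- a2)))
    with (Rpower za (- a2) * ((a1 * (alpha * delta - 1) * r + (a1 - 1) * za * delta) / (r * delta)))
    by (field; lra).
  assert (hn : a1 * (alpha * delta - 1) * r + (a1 - 1) * za * delta <= 0).
  { assert (e0 : a1 * (delta - r) - delta = -(A * a1 * (a1 - 1)) + (A * a1 ^ 2 + (delta - r - A) * a1 - delta)) by ring.
    rewrite q in e0.
    assert (0 < A * a1 * (a1 - 1)) by (apply Rmult_lt_0_compat; [apply Rmult_lt_0_compat|]; lra).
    assert (h1 : a1 * (delta - r) - delta < 0) by lra.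
    assert (h2 : (a1 - 1) * delta * (1 - alpha * delta - za) >= 0).
    { apply Rle_ge. apply Rmult_le_pos; [|lra]. nra. }
    assert (h3 : (1 - alpha * delta) * (a1 * (delta - r) - delta) <= 0).
    { assert (0 <= 1 - alpha * delta) by lra. nra. }
    assert (e : a1 * (alpha * delta - 1) * r + (a1 - 1) * za * delta =
       - ((a1 - 1) * delta * (1 - alpha * delta - za)) + (1 - alpha * delta) * (a1 * (delta - r) - delta)) by ring.
    lra. }
  assert (0 < r * delta) by nra.
  assert (((a1 * (alpha * delta - 1) * r + (a1 - 1) * za * delta) / (r * delta)) <= 0).
  { unfold Rdiv. assert (0 < / (r * delta)) by (apply Rinv_0_lt_compat; lra). nra. }
  nra.
Qed.

Lemma lavs_small (r mu sigma delta alpha beta h1 h2 : R) :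
  0 < r -> 0 < sigma -> 0 < delta -> mu <> r -> 0 <= alpha -> alpha < 1 / delta ->
  0 <= beta -> 0 < h2 -> h2 <= h1 ->
  small (fun g => x_lavs r mu sigma delta g alpha beta h1 h2 - h1 / r).
Proof.
  intros hr hs hd hmu ha0 ha1 hb0 hh2 hh12.
  destruct (base r mu sigma delta hr hs hd hmu) as (hA & ha1' & ha2' & hk & _).
  pose proof (za_spec r mu sigma delta alpha hr hs hd hmu ha0 ha1) as HZ.
  apply za_iff in HZ; auto. destruct HZ as (hz0 & hz1 & _).
  assert (hX3 : 0 < ((kappa r mu sigma) ^ 2 * ((m1 r mu sigma delta) - (m2 r mu sigma delta)) * (m1 r mu sigma delta) * ((m1 r mu sigma delta) - 1))).
  { rewrite hk. apply Rmult_lt_0_compat; [apply Rmult_lt_0_compat; [apply Rmult_lt_0_compat|]|]; lra. }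
  apply small_ext with (fun g => (- (m1 r mu sigma delta)) * ((cA ((m2 r mu sigma delta) * (beta * delta + 1) / delta * Rpower (zbeta r mu sigma delta beta) (- (m1 r mu sigma delta)) + (1 - (m2 r mu sigma delta)) / r * Rpower (zbeta r mu sigma delta beta) (1 - (m1 r mu sigma delta))) ((m1 r mu sigma delta) - (m2 r mu sigma delta)) (m1 r mu sigma delta) g * HY h2 (zalpha r mu sigma delta alpha) h1 (m1 r mu sigma delta) g
     + (-1) * (cA 2 ((kappa r mu sigma) ^ 2 * ((m1 r mu sigma delta) - (m2 r mu sigma delta)) * (m1 r mu sigma delta) * ((m1 r mu sigma delta) - 1)) (m1 r mu sigma delta) g * HY h2 (zalpha r mu sigma delta alpha) h1 (m1 r mu sigma delta) g)) + cA 2 ((kappa r mu sigma) ^ 2 * ((m1 r mu sigma delta) - (m2 r mu sigma delta)) * (m1 r mu sigma delta) * ((m1 r mu sigma delta) - 1)) (m1 r mu sigma delta) g * HY h1 (zalpha r mu sigma delta alpha) h1 (m1 r mu sigma delta) g)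
     + (- (m2 r mu sigma delta)) * (cA ((m1 r mu sigma delta) * (alpha * delta - 1) / delta * Rpower (zalpha r mu sigma delta alpha) (- (m2 r mu sigma delta)) + ((m1 r mu sigma delta) - 1) / r * Rpower (zalpha r mu sigma delta alpha) (1 - (m2 r mu sigma delta))) ((m1 r mu sigma delta) - (m2 r mu sigma delta)) (m2 r mu sigma delta) g * HY h1 (zalpha r mu sigma delta alpha) h1 (m2 r mu sigma delta) g)).
  { intros g hg. cbv beta. unfold x_lavs, Defs.C1, Defs.C3, Defs.C5, Defs.C2, cA, HY. unfold Rdiv. ring. }
  apply small_plus; apply small_scal.
  - apply small_plus; [apply small_plus|].
    + apply (small_term _ _ _ ((m1 r mu sigma delta) - 1) _ (Rpower (zalpha r mu sigma delta alpha) ((m1 r mu sigma delta) - 1) * h1)); try lra.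
      * intros g hg; apply m_a1; lra.
      * intros g hg; apply HY_b1; lra.
    + apply small_scal.
      apply (small_term _ _ _ ((m1 r mu sigma delta) - 1) _ (Rpower (zalpha r mu sigma delta alpha) ((m1 r mu sigma delta) - 1) * h1)); try lra.
      * intros g hg; apply m_a1; lra.
      * intros g hg; apply HY_b1; lra.
    + apply (small_term _ _ _ ((m1 r mu sigma delta) - 1) _ (Rpower (zalpha r mu sigma delta alpha) ((m1 r mu sigma delta) - 1) * h1)); try lra.
      * intros g hg; apply m_a1; lra.
      * intros g hg; apply HY_b1; lra.
  - apply (small_term _ _ _ (- (m2 r mu sigma delta)) _ (Rpower (zalpha r mu sigma delta alpha) ((m2 r mu sigma delta) - 1) * h1)); try lra.
    * intros g hg; apply m_a2; lra.
    * intros g hg; apply HY_b2; lra.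
Qed.

Lemma gloom_small (r mu sigma delta alpha beta h1 h2 : R) :
  0 < r -> 0 < sigma -> 0 < delta -> mu <> r -> 0 <= alpha -> alpha < 1 / delta ->
  0 <= beta -> 0 < h2 -> h2 <= h1 ->
  small (fun g => x_gloom r mu sigma delta g alpha beta h1 h2 - h2 / r).
Proof.
  intros hr hs hd hmu ha0 ha1 hb0 hh2 hh12.
  destruct (base r mu sigma delta hr hs hd hmu) as (hA & ha1' & ha2' & hk & _).
  pose proof (zb_spec r mu sigma delta beta hr hs hd hmu hb0) as HZ.
  apply zb_iff in HZ; auto. destruct HZ as (hz1 & _).
  assert (hz0 : 0 < (zbeta r mu sigma delta beta)) by nra.
  assert (hX6 : 0 < ((kappa r mu sigma) ^ 2 * ((m1 r mu sigma delta) - (m2 r mu sigma delta)) * (m2 r mu sigma delta) * ((m2 r mu sigma delta) - 1))).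
  { rewrite hk. replace (2 * qa r mu sigma * ((m1 r mu sigma delta) - (m2 r mu sigma delta)) * (m2 r mu sigma delta) * ((m2 r mu sigma delta) - 1)) with
      (2 * qa r mu sigma * ((m1 r mu sigma delta) - (m2 r mu sigma delta)) * (- (m2 r mu sigma delta)) * (1 - (m2 r mu sigma delta))) by ring.
    apply Rmult_lt_0_compat; [apply Rmult_lt_0_compat; [apply Rmult_lt_0_compat|]|]; lra. }
  apply small_ext with (fun g => (- (m1 r mu sigma delta)) * (cA ((m2 r mu sigma delta) * (beta * delta + 1) / delta * Rpower (zbeta r mu sigma delta beta) (- (m1 r mu sigma delta)) + (1 - (m2 r mu sigma delta)) / r * Rpower (zbeta r mu sigma delta beta) (1 - (m1 r mu sigma delta))) ((m1 r mu sigma delta) - (m2 r mu sigma delta)) (m1 r mu sigma delta) g * HY h2 (zbeta r mu sigma delta beta) h2 (m1 r mu sigma delta) g)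
     + (- (m2 r mu sigma delta)) * ((cA ((m1 r mu sigma delta) * (alpha * delta - 1) / delta * Rpower (zalpha r mu sigma delta alpha) (- (m2 r mu sigma delta)) + ((m1 r mu sigma delta) - 1) / r * Rpower (zalpha r mu sigma delta alpha) (1 - (m2 r mu sigma delta))) ((m1 r mu sigma delta) - (m2 r mu sigma delta)) (m2 r mu sigma delta) g * HY h1 (zbeta r mu sigma delta beta) h2 (m2 r mu sigma delta) g + cA 2 ((kappa r mu sigma) ^ 2 * ((m1 r mu sigma delta) - (m2 r mu sigma delta)) * (m2 r mu sigma delta) * ((m2 r mu sigma delta) - 1)) (m2 r mu sigma delta) g * HY h1 (zbeta r mu sigma delta beta) h2 (m2 r mu sigma delta) g)
        + (-1) * (cA 2 ((kappa r mu sigma) ^ 2 * ((m1 r mu sigma delta) - (m2 r mu sigma delta)) * (m2 r mu sigma delta) * ((m2 r mu sigma delta) - 1)) (m2 r mu sigma delta) g * HY h2 (zbeta r mu sigma delta beta) h2 (m2 r mu sigma delta) g))).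
  { intros g hg. cbv beta. unfold x_gloom, Defs.C6, Defs.C4, Defs.C5, Defs.C2, cA, HY. unfold Rdiv. ring. }
  apply small_plus; apply small_scal.
  - apply (small_term _ _ _ ((m1 r mu sigma delta) - 1) _ (Rpower (zbeta r mu sigma delta beta) ((m1 r mu sigma delta) - 1) * h2)); try lra.
    * intros g hg; apply m_a1; lra.
    * intros g hg; apply HY_b1; lra.
  - apply small_plus; [apply small_plus|].
    + apply (small_term _ _ _ (- (m2 r mu sigma delta)) _ (Rpower (zbeta r mu sigma delta beta) ((m2 r mu sigma delta) - 1) * h1)); try lra.
      * intros g hg; apply m_a2; lra.
      * intros g hg; apply HY_b2; lra.
    + apply (small_term _ _ _ (- (m2 r mu sigma delta)) _ (Rpower (zbeta r mu sigma delta beta) ((m2 r mu sigma delta) - 1) * h1)); try lra.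
      * intros g hg; apply m_a2; lra.
      * intros g hg; apply HY_b2; lra.
    + apply small_scal.
      apply (small_term _ _ _ (- (m2 r mu sigma delta)) _ (Rpower (zbeta r mu sigma delta beta) ((m2 r mu sigma delta) - 1) * h2)); try lra.
      * intros g hg; apply m_a2; lra.
      * intros g hg; apply HY_b2; lra.
Qed.

Lemma lavs_order (r mu sigma delta alpha beta h1 h2 g : R) :
  0 < r -> 0 < sigma -> 0 < delta -> mu <> r -> 0 <= alpha -> alpha < 1 / delta ->
  0 <= beta -> 0 < h2 -> h2 <= h1 -> 1 < g ->
  x_peak r mu sigma delta g alpha beta h1 h2 <= x_lavs r mu sigma delta g alpha beta h1 h2.
Proof.
  intros hr hs hd hmu ha0 ha1 hb0 hh2 hh12 hg.
  destruct (base r mu sigma delta hr hs hd hmu) as (hA & ha1' & ha2' & hk & hrr & hdd & q1 & q2).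
  pose proof (za_spec r mu sigma delta alpha hr hs hd hmu ha0 ha1) as HZ.
  apply za_iff in HZ; auto. destruct HZ as (hz0 & hz1 & _).
  pose proof (zb_spec r mu sigma delta beta hr hs hd hmu hb0) as HZb.
  apply zb_iff in HZb; auto. destruct HZb as (hzb1 & _).
  assert (hB : 0 <= ((m2 r mu sigma delta) * (beta * delta + 1) / delta * Rpower (zbeta r mu sigma delta beta) (- (m1 r mu sigma delta)) + (1 - (m2 r mu sigma delta)) / r * Rpower (zbeta r mu sigma delta beta) (1 - (m1 r mu sigma delta)))) by (apply (BC_nonneg r delta (qa r mu sigma)); auto).
  assert (hD : ((m1 r mu sigma delta) * (alpha * delta - 1) / delta * Rpower (zalpha r mu sigma delta alpha) (- (m2 r mu sigma delta)) + ((m1 r mu sigma delta) - 1) / r * Rpower (zalpha r mu sigma delta alpha) (1 - (m2 r mu sigma delta))) <= 0) by (apply (DC_nonpos r delta (qa r mu sigma)); auto).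
  pose proof (gs_bounds g hg) as hgs.
  assert (hX3 : 0 < ((kappa r mu sigma) ^ 2 * ((m1 r mu sigma delta) - (m2 r mu sigma delta)) * (m1 r mu sigma delta) * ((m1 r mu sigma delta) - 1))).
  { rewrite hk. apply Rmult_lt_0_compat; [apply Rmult_lt_0_compat; [apply Rmult_lt_0_compat|]|]; lra. }
  assert (he1 : 0 <= 1 + g * ((m1 r mu sigma delta) - 1)) by nra.
  assert (hC1 : 0 <= Defs.C1 r mu sigma delta g beta h1 h2).
  { replace (Defs.C1 r mu sigma delta g beta h1 h2) with
      (cA ((m2 r mu sigma delta) * (beta * delta + 1) / delta * Rpower (zbeta r mu sigma delta beta) (- (m1 r mu sigma delta)) + (1 - (m2 r mu sigma delta)) / r * Rpower (zbeta r mu sigma delta beta) (1 - (m1 r mu sigma delta))) ((m1 r mu sigma delta) - (m2 r mu sigma delta)) (m1 r mu sigma delta) g * Rpower h2 (1 + g * ((m1 r mu sigma delta) - 1)) +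
       cA 2 ((kappa r mu sigma) ^ 2 * ((m1 r mu sigma delta) - (m2 r mu sigma delta)) * (m1 r mu sigma delta) * ((m1 r mu sigma delta) - 1)) (m1 r mu sigma delta) g * (Rpower h1 (1 + g * ((m1 r mu sigma delta) - 1)) - Rpower h2 (1 + g * ((m1 r mu sigma delta) - 1))))
      by (unfold Defs.C1, Defs.C3, Defs.C5, cA; unfold Rdiv; ring).
    apply Rplus_le_le_0_compat; apply Rmult_le_pos.
    - apply cA_sign_pos; auto. apply Rdiv_le_0_compat; auto. apply Rmult_lt_0_compat; lra.
    - left; apply Rp_pos.
    - apply cA_sign_pos; auto. left. apply Rdiv_lt_0_compat; [lra|]. apply Rmult_lt_0_compat; lra.
    - assert (Rpower h2 (1 + g * ((m1 r mu sigma delta) - 1)) <= Rpower h1 (1 + g * ((m1 r mu sigma delta) - 1))) by (apply Rle_Rpower_l; lra).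
      lra. }
  assert (hC2 : 0 <= Defs.C2 r mu sigma delta g alpha h1).
  { replace (Defs.C2 r mu sigma delta g alpha h1) with
      (cA ((m1 r mu sigma delta) * (alpha * delta - 1) / delta * Rpower (zalpha r mu sigma delta alpha) (- (m2 r mu sigma delta)) + ((m1 r mu sigma delta) - 1) / r * Rpower (zalpha r mu sigma delta alpha) (1 - (m2 r mu sigma delta))) ((m1 r mu sigma delta) - (m2 r mu sigma delta)) (m2 r mu sigma delta) g * Rpower h1 (1 + g * ((m2 r mu sigma delta) - 1)))
      by (unfold Defs.C2, cA; unfold Rdiv; ring).
    apply Rmult_le_pos; [|left; apply Rp_pos].
    apply cA_sign_pos; auto.
    assert (/ (((m1 r mu sigma delta) - (m2 r mu sigma delta)) * ((m2 r mu sigma delta) - gstar g)) < 0).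
    { apply Rinv_lt_0_compat. replace (((m1 r mu sigma delta) - (m2 r mu sigma delta)) * ((m2 r mu sigma delta) - gstar g)) with (- (((m1 r mu sigma delta) - (m2 r mu sigma delta)) * (gstar g - (m2 r mu sigma delta)))) by ring.
      assert (0 < ((m1 r mu sigma delta) - (m2 r mu sigma delta)) * (gstar g - (m2 r mu sigma delta))) by (apply Rmult_lt_0_compat; lra). lra. }
    unfold Rdiv. nra. }
  pose proof (Rp_pos h1 (- g)) as hy.
  set (y := Rpower h1 (- g)) in *.
  assert (0 <= alpha * delta) by (apply Rmult_le_pos; lra).
  assert (hza1 : (zalpha r mu sigma delta alpha) <= 1) by lra.
  assert (hY1 : Rpower ((zalpha r mu sigma delta alpha) * y) ((m1 r mu sigma delta) - 1) <= Rpower y ((m1 r mu sigma delta) - 1)).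
  { apply Rle_Rpower_l. lra. split. apply Rmult_lt_0_compat; lra. nra. }
  assert (hY2 : Rpower y ((m2 r mu sigma delta) - 1) <= Rpower ((zalpha r mu sigma delta alpha) * y) ((m2 r mu sigma delta) - 1)).
  { apply Rp_le_base_neg. lra. split. apply Rmult_lt_0_compat; lra. nra. }
  unfold x_lavs, x_peak. fold y.
  assert (E1 : 0 <= (m1 r mu sigma delta) * Defs.C1 r mu sigma delta g beta h1 h2 * (Rpower y ((m1 r mu sigma delta) - 1) - Rpower ((zalpha r mu sigma delta alpha) * y) ((m1 r mu sigma delta) - 1))).
  { apply Rmult_le_pos; [apply Rmult_le_pos|]; lra. }
  assert (E2 : 0 <= (- (m2 r mu sigma delta)) * Defs.C2 r mu sigma delta g alpha h1 * (Rpower ((zalpha r mu sigma delta alpha) * y) ((m2 r mu sigma delta) - 1) - Rpower y ((m2 r mu sigma delta) - 1))).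
  { apply Rmult_le_pos; [apply Rmult_le_pos|]; lra. }
  nra.
Qed.

Lemma gloom_order (r mu sigma delta alpha beta h1 h2 g : R) :
  0 < r -> 0 < sigma -> 0 < delta -> mu <> r -> 0 <= alpha -> alpha < 1 / delta ->
  0 <= beta -> 0 < h2 -> h2 <= h1 -> 1 < g ->
  x_gloom r mu sigma delta g alpha beta h1 h2 <= x_valy r mu sigma delta g alpha beta h1 h2.
Proof.
  intros hr hs hd hmu ha0 ha1 hb0 hh2 hh12 hg.
  destruct (base r mu sigma delta hr hs hd hmu) as (hA & ha1' & ha2' & hk & hrr & hdd & q1 & q2).
  pose proof (za_spec r mu sigma delta alpha hr hs hd hmu ha0 ha1) as HZ.
  apply za_iff in HZ; auto. destruct HZ as (hz0 & hz1 & _).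
  pose proof (zb_spec r mu sigma delta beta hr hs hd hmu hb0) as HZb.
  apply zb_iff in HZb; auto. destruct HZb as (hzb1 & _).
  assert (hzb : 1 <= (zbeta r mu sigma delta beta)) by nra.
  assert (hB : 0 <= ((m2 r mu sigma delta) * (beta * delta + 1) / delta * Rpower (zbeta r mu sigma delta beta) (- (m1 r mu sigma delta)) + (1 - (m2 r mu sigma delta)) / r * Rpower (zbeta r mu sigma delta beta) (1 - (m1 r mu sigma delta)))) by (apply (BC_nonneg r delta (qa r mu sigma)); auto).
  assert (hD : ((m1 r mu sigma delta) * (alpha * delta - 1) / delta * Rpower (zalpha r mu sigma delta alpha) (- (m2 r mu sigma delta)) + ((m1 r mu sigma delta) - 1) / r * Rpower (zalpha r mu sigma delta alpha) (1 - (m2 r mu sigma delta))) <= 0) by (apply (DC_nonpos r delta (qa r mu sigma)); auto).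
  pose proof (gs_bounds g hg) as hgs.
  assert (hX6 : 0 < ((kappa r mu sigma) ^ 2 * ((m1 r mu sigma delta) - (m2 r mu sigma delta)) * (m2 r mu sigma delta) * ((m2 r mu sigma delta) - 1))).
  { rewrite hk. replace (2 * qa r mu sigma * ((m1 r mu sigma delta) - (m2 r mu sigma delta)) * (m2 r mu sigma delta) * ((m2 r mu sigma delta) - 1)) with
      (2 * qa r mu sigma * ((m1 r mu sigma delta) - (m2 r mu sigma delta)) * (- (m2 r mu sigma delta)) * (1 - (m2 r mu sigma delta))) by ring.
    apply Rmult_lt_0_compat; [apply Rmult_lt_0_compat; [apply Rmult_lt_0_compat|]|]; lra. }
  assert (he2 : 1 + g * ((m2 r mu sigma delta) - 1) <= 0) by nra.
  assert (hC5 : 0 <= Defs.C5 r mu sigma delta g beta h2).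
  { replace (Defs.C5 r mu sigma delta g beta h2) with
      (cA ((m2 r mu sigma delta) * (beta * delta + 1) / delta * Rpower (zbeta r mu sigma delta beta) (- (m1 r mu sigma delta)) + (1 - (m2 r mu sigma delta)) / r * Rpower (zbeta r mu sigma delta beta) (1 - (m1 r mu sigma delta))) ((m1 r mu sigma delta) - (m2 r mu sigma delta)) (m1 r mu sigma delta) g * Rpower h2 (1 + g * ((m1 r mu sigma delta) - 1)))
      by (unfold Defs.C5, cA; unfold Rdiv; ring).
    apply Rmult_le_pos; [|left; apply Rp_pos].
    apply cA_sign_pos; auto. apply Rdiv_le_0_compat; auto. apply Rmult_lt_0_compat; lra. }
  assert (hneg : / (((m1 r mu sigma delta) - (m2 r mu sigma delta)) * ((m2 r mu sigma delta) - gstar g)) < 0).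
  { apply Rinv_lt_0_compat. replace (((m1 r mu sigma delta) - (m2 r mu sigma delta)) * ((m2 r mu sigma delta) - gstar g)) with (- (((m1 r mu sigma delta) - (m2 r mu sigma delta)) * (gstar g - (m2 r mu sigma delta)))) by ring.
    assert (0 < ((m1 r mu sigma delta) - (m2 r mu sigma delta)) * (gstar g - (m2 r mu sigma delta))) by (apply Rmult_lt_0_compat; lra). lra. }
  assert (hneg6 : / (((kappa r mu sigma) ^ 2 * ((m1 r mu sigma delta) - (m2 r mu sigma delta)) * (m2 r mu sigma delta) * ((m2 r mu sigma delta) - 1)) * ((m2 r mu sigma delta) - gstar g)) < 0).
  { apply Rinv_lt_0_compat. replace (((kappa r mu sigma) ^ 2 * ((m1 r mu sigma delta) - (m2 r mu sigma delta)) * (m2 r mu sigma delta) * ((m2 r mu sigma delta) - 1)) * ((m2 r mu sigma delta) - gstar g)) with (- (((kappa r mu sigma) ^ 2 * ((m1 r mu sigma delta) - (m2 r mu sigma delta)) * (m2 r mu sigma delta) * ((m2 r mu sigma delta) - 1)) * (gstar g - (m2 r mu sigma delta)))) by ring.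
    assert (0 < ((kappa r mu sigma) ^ 2 * ((m1 r mu sigma delta) - (m2 r mu sigma delta)) * (m2 r mu sigma delta) * ((m2 r mu sigma delta) - 1)) * (gstar g - (m2 r mu sigma delta))) by (apply Rmult_lt_0_compat; lra). lra. }
  assert (hC6 : 0 <= Defs.C6 r mu sigma delta g alpha h1 h2).
  { replace (Defs.C6 r mu sigma delta g alpha h1 h2) with
      (cA ((m1 r mu sigma delta) * (alpha * delta - 1) / delta * Rpower (zalpha r mu sigma delta alpha) (- (m2 r mu sigma delta)) + ((m1 r mu sigma delta) - 1) / r * Rpower (zalpha r mu sigma delta alpha) (1 - (m2 r mu sigma delta))) ((m1 r mu sigma delta) - (m2 r mu sigma delta)) (m2 r mu sigma delta) g * Rpower h1 (1 + g * ((m2 r mu sigma delta) - 1)) +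
       cA 2 ((kappa r mu sigma) ^ 2 * ((m1 r mu sigma delta) - (m2 r mu sigma delta)) * (m2 r mu sigma delta) * ((m2 r mu sigma delta) - 1)) (m2 r mu sigma delta) g * (Rpower h1 (1 + g * ((m2 r mu sigma delta) - 1)) - Rpower h2 (1 + g * ((m2 r mu sigma delta) - 1))))
      by (unfold Defs.C6, Defs.C4, Defs.C2, cA; unfold Rdiv; ring).
    apply Rplus_le_le_0_compat.
    - apply Rmult_le_pos; [|left; apply Rp_pos].
      apply cA_sign_pos; auto. unfold Rdiv. nra.
    - assert (cA 2 ((kappa r mu sigma) ^ 2 * ((m1 r mu sigma delta) - (m2 r mu sigma delta)) * (m2 r mu sigma delta) * ((m2 r mu sigma delta) - 1)) (m2 r mu sigma delta) g <= 0) by (apply cA_sign_neg; auto; unfold Rdiv; nra).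
      assert (Rpower h1 (1 + g * ((m2 r mu sigma delta) - 1)) <= Rpower h2 (1 + g * ((m2 r mu sigma delta) - 1))) by (apply Rp_le_base_neg; lra).
      nra. }
  pose proof (Rp_pos h2 (- g)) as hy.
  set (y := Rpower h2 (- g)) in *.
  assert (hY1 : Rpower y ((m1 r mu sigma delta) - 1) <= Rpower ((zbeta r mu sigma delta beta) * y) ((m1 r mu sigma delta) - 1)).
  { apply Rle_Rpower_l. lra. split. lra. nra. }
  assert (hY2 : Rpower ((zbeta r mu sigma delta beta) * y) ((m2 r mu sigma delta) - 1) <= Rpower y ((m2 r mu sigma delta) - 1)).
  { apply Rp_le_base_neg. lra. split. lra. nra. }
  unfold x_gloom, x_valy. fold y.
  assert (E1 : 0 <= (m1 r mu sigma delta) * Defs.C5 r mu sigma delta g beta h2 * (Rpower ((zbeta r mu sigma delta beta) * y) ((m1 r mu sigma delta) - 1) - Rpower y ((m1 r mu sigma delta) - 1))).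
  { apply Rmult_le_pos; [apply Rmult_le_pos|]; lra. }
  assert (E2 : 0 <= (- (m2 r mu sigma delta)) * Defs.C6 r mu sigma delta g alpha h1 h2 * (Rpower y ((m2 r mu sigma delta) - 1) - Rpower ((zbeta r mu sigma delta beta) * y) ((m2 r mu sigma delta) - 1))).
  { apply Rmult_le_pos; [apply Rmult_le_pos|]; lra. }
  nra.
Qed.

Lemma K0_pos r mu sigma delta g : 0 < r -> 0 < delta -> 1 < g -> 0 < K0 r mu sigma delta g.
Proof.
  intros hr hd hg. unfold K0.
  replace (r + (delta - r) / g) with ((r * (g - 1) + delta) / g) by (field; lra).
  assert (0 < (r * (g - 1) + delta) / g) by (apply Rdiv_lt_0_compat; nra).
  assert (0 <= (g - 1) / (2 * g ^ 2) * kappa r mu sigma ^ 2).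
  { apply Rmult_le_pos. apply Rdiv_le_0_compat. lra. nra. apply pow2_ge_0. }
  lra.
Qed.

Lemma za_lim r mu sigma delta : 0 < r -> 0 < sigma -> 0 < delta -> mu <> r ->
  filterlim (fun alpha => zalpha r mu sigma delta alpha) (at_left (1 / delta)) (locally 0).
Proof.
  intros hr hs hd hmu. apply filterlim_locally. intros eps.
  pose proof (cond_pos eps) as he.
  assert (hη : 0 < Rmin (eps / delta) (1 / delta)).
  { apply Rmin_pos; apply Rdiv_lt_0_compat; lra. }
  exists (mkposreal _ hη). intros a hball hlt.
  change (Rabs (a - 1 / delta) < Rmin (eps / delta) (1 / delta)) in hball.
  apply Rabs_def2 in hball. destruct hball as [hb1 hb2].
  pose proof (Rmin_l (eps / delta) (1 / delta)). pose proof (Rmin_r (eps / delta) (1 / delta)).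
  assert (ha0 : 0 <= a) by lra.
  pose proof (za_spec r mu sigma delta a hr hs hd hmu ha0 hlt) as HZ.
  apply za_iff in HZ; auto. destruct HZ as (hz0 & hz1 & _).
  change (Rabs (zalpha r mu sigma delta a - 0) < eps).
  rewrite Rminus_0_r, Rabs_pos_eq by lra.
  assert (1 - a * delta = delta * (1 / delta - a)) by (field; lra).
  assert (delta * (1 / delta - a) < delta * (eps / delta)) by (apply Rmult_lt_compat_l; lra).
  replace (delta * (eps / delta)) with (pos eps) in H2 by (field; lra).
  lra.
Qed.

Lemma zb_lim r mu sigma delta : 0 < r -> 0 < sigma -> 0 < delta -> mu <> r ->
  filterlim (fun beta => zbeta r mu sigma delta beta) (Rbar_locally p_infty) (Rbar_locally p_infty).
Proof.
  intros hr hs hd hmu P HP. destruct HP as [M HM].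
  exists (Rmax 0 (M / delta)). intros b hb.
  pose proof (Rmax_l 0 (M / delta)). pose proof (Rmax_r 0 (M / delta)).
  apply HM.
  pose proof (zb_spec r mu sigma delta b hr hs hd hmu ltac:(lra)) as HZ.
  apply zb_iff in HZ; auto. destruct HZ as (hz1 & _).
  assert (M / delta * delta < b * delta) by (apply Rmult_lt_compat_r; lra).
  replace (M / delta * delta) with M in H1 by (field; lra).
  lra.
Qed.

Theorem theorem4p2 (r mu sigma delta : R) :
  0 < r -> 0 < mu -> 0 < sigma -> 0 < delta -> mu <> r ->
  (* (i) *)
  (zalpha r mu sigma delta 0 = 1 /\ zbeta r mu sigma delta 0 = 1 /\
   (forall g h1 h2 : R, 0 < g -> g <> 1 -> 0 < K0 r mu sigma delta g ->
      0 < h1 -> 0 < h2 ->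
      x_lavs r mu sigma delta g 0 0 h1 h2 = x_peak r mu sigma delta g 0 0 h1 h2 /\
      x_gloom r mu sigma delta g 0 0 h1 h2 = x_valy r mu sigma delta g 0 0 h1 h2)) /\
  filterlim (fun alpha => zalpha r mu sigma delta alpha) (at_left (1 / delta))
    (locally 0) /\
  filterlim (fun beta => zbeta r mu sigma delta beta) (Rbar_locally p_infty)
    (Rbar_locally p_infty) /\
  (* (ii) : c g x is the optimal feedback consumption c^*(x, h1, h2) for the
     risk-aversion parameter g (h1, h2 and the other parameters fixed) *)
  (forall (alpha beta h1 h2 : R) (c : R -> R -> R),
     0 <= alpha -> alpha < 1 / delta -> 0 <= beta ->
     0 < h2 -> h2 <= h1 ->
     (forall g x, 0 < g -> g <> 1 -> 0 < K0 r mu sigma delta g ->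
        x_peak r mu sigma delta g alpha beta h1 h2 <= x <=
        x_lavs r mu sigma delta g alpha beta h1 h2 -> c g x = h1) ->
     (forall g x, 0 < g -> g <> 1 -> 0 < K0 r mu sigma delta g ->
        x_gloom r mu sigma delta g alpha beta h1 h2 <= x <=
        x_valy r mu sigma delta g alpha beta h1 h2 -> c g x = h2) ->
     filterlim (fun g => x_lavs r mu sigma delta g alpha beta h1 h2 /
                         c g (x_lavs r mu sigma delta g alpha beta h1 h2))
       (Rbar_locally p_infty) (locally (1 / r)) /\
     filterlim (fun g => x_gloom r mu sigma delta g alpha beta h1 h2 /
                         c g (x_gloom r mu sigma delta g alpha beta h1 h2))
       (Rbar_locally p_infty) (locally (1 / r))).
Proof.
  intros hr hmu0 hs hd hmu.
  split; [|split; [|split]].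
  - split; [|split].
    + apply za0; auto.
    + apply zb0; auto.
    + intros g h1 h2 _ _ _ _ _. split.
      * unfold x_lavs, x_peak. rewrite (za0 r mu sigma delta hr hs hd hmu), Rmult_1_l. reflexivity.
      * unfold x_gloom, x_valy. rewrite (zb0 r mu sigma delta hr hs hd hmu), Rmult_1_l. reflexivity.
  - apply za_lim; auto.
  - apply zb_lim; auto.
  - intros alpha beta h1 h2 c ha0 ha1 hb0 hh2 hh12 Hc1 Hc2. split.
    + apply small_lim.
      apply small_ext with (fun g => / h1 * (x_lavs r mu sigma delta g alpha beta h1 h2 - h1 / r)).
      * intros g hg. cbv beta.
        rewrite (Hc1 g (x_lavs r mu sigma delta g alpha beta h1 h2)); try lra.
        -- field; lra.
        -- apply K0_pos; lra.
        -- split; [apply lavs_order|]; lra.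
      * apply small_scal. apply lavs_small; auto.
    + apply small_lim.
      apply small_ext with (fun g => / h2 * (x_gloom r mu sigma delta g alpha beta h1 h2 - h2 / r)).
      * intros g hg. cbv beta.
        rewrite (Hc2 g (x_gloom r mu sigma delta g alpha beta h1 h2)); try lra.
        -- field; lra.
        -- apply K0_pos; lra.
        -- split; [|apply gloom_order]; lra.
      * apply small_scal. apply gloom_small; auto.
Qed.
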